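(* Let $d\in\mathbb{N}$ and let $\mathcal{P}$ be a partition of $\mathbb{R}^{d}$ with the adjacent-or-far property. Suppose there exists $D\in(0,\infty)$ such that $\operatorname{diam}(X)<D$ for all $X\in\mathcal{P}$. Then $\mathcal{P}$ contains a $(d+1)$-clique.
   Context: On $\mathbb{R}^d$ use $d_{max}(\vec{x},\vec{y})=\max_i|x_i-y_i|$ and $\operatorname{diam}(X)=\sup\{d_{max}(\vec{x},\vec{y}):\vec{x},\vec{y}\in X\}$. Members $X,Y$ of $\mathcal{P}$ are adjacent if $\overline{X}\cap\overline{Y}\neq\emptyset$ (closures); an $n$-clique is a set of $n$ distinct pairwise adjacent members. $\mathcal{P}$ has the adjacent-or-far property if there exists $\epsilon\in(0,\infty)$ such that for all $X,Y\in\mathcal{P}$, either $X$ and $Y$ are adjacent or $d_{max}(\vec{x},\vec{y})>\epsilon$ for all $\vec{x}\in X$, $\vec{y}\in Y$. *)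

(* Defs.v *)
From HB Require Import structures.
From mathcomp Require Import all_boot all_order all_algebra.
From mathcomp Require Import all_classical all_reals.
From mathcomp Require Import ereal.
Set Implicit Arguments. Unset Strict Implicit. Unset Printing Implicit Defensive.
Import Order.TTheory GRing.Theory Num.Theory.
Local Open Scope classical_set_scope.
Local Open Scope ring_scope.

Section Defs.
Variables (R : realType) (d : nat).
Notation pt := ('I_d -> R).

Definition dmax (x y : pt) : R := \big[Num.max/0]_(i < d) `|x i - y i|.

Definition diam (X : set pt) : \bar R :=
  ereal_sup [set (dmax xy.1 xy.2)%:E | xy in [set xy : pt * pt | X xy.1 /\ X xy.2]].

Definition mclosure (X : set pt) : set pt :=
  [set x | forall e : R, 0 < e -> exists2 y, X y & dmax x y < e].

Definition is_partition (P : set (set pt)) : Prop :=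
  (forall X, P X -> X !=set0) /\
  (forall X Y, P X -> P Y -> X <> Y -> X `&` Y = set0) /\
  (forall x : pt, exists2 X, P X & X x).

Definition adjacent (X Y : set pt) : Prop := mclosure X `&` mclosure Y !=set0.

Definition adjacent_or_far (P : set (set pt)) : Prop :=
  exists2 eps : R, 0 < eps & forall X Y, P X -> P Y ->
    adjacent X Y \/ (forall x y, X x -> Y y -> eps < dmax x y).

Definition has_clique (P : set (set pt)) (n : nat) : Prop :=
  exists C : 'I_n -> set pt, injective C /\ (forall i, P (C i)) /\
    (forall i j, i != j -> adjacent (C i) (C j)).
End Defs.

(* Main.v *)
Require Import Defs.
From HB Require Import structures.
From mathcomp Require Import all_boot all_order all_algebra.
From mathcomp Require Import zify.
From mathcomp Require Import fingroup perm.
From Stdlib Require Import FunctionalExtensionality.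
Set Implicit Arguments. Unset Strict Implicit. Unset Printing Implicit Defensive.

Module KuhnDev.
Lemma involution_parity (T : finType) (phi : T -> T) (A : {set T}) :
  (forall x, x \in A -> phi x \in A) -> (forall x, x \in A -> phi (phi x) = x) ->
  odd #|A| = odd #|[set x in A | phi x == x]|.
Proof.
move=> Hin Hinv.
have [m Hm] : exists m, #|A| <= m by exists #|A|.
elim: m A Hin Hinv Hm => [|m IH] A Hin Hinv Hm.
  move: Hm; rewrite leqn0 => /eqP/cards0_eq ->.
  rewrite cards0; suff -> : #|[set x in set0 | phi x == x]| = 0 by [].
  apply/eqP; rewrite cards_eq0; apply/eqP. apply/setP => x; by rewrite !inE.
case: (boolP [exists x, (x \in A) && (phi x != x)]) => [/existsP [x /andP [xA nfx]]|H]; last first.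
  suff -> : [set x in A | phi x == x] = A by [].
  apply/setP => x; rewrite inE; case: (boolP (x \in A)) => //= xA.
  apply: contraNT H => H; apply/existsP; exists x; by rewrite xA.
set y := phi x.
have yA : y \in A by apply: Hin.
have yx : phi y = x by apply: Hinv.
set B := A :\ x :\ y.
have cardA : #|A| = #|B|.+2.
  have nyx : (y == x) = false by apply/negbTE.
  rewrite (cardsD1 x A) xA (cardsD1 y (A :\ x)) !inE nyx yA /=.
  by rewrite add1n.
have HB1 : forall z, z \in B -> phi z \in B.
  move=> z; rewrite !inE => /and3P [zy zx zA]; rewrite Hin // andbT.
  apply/andP; split.
    apply: contraNneq zx => E; by rewrite -(Hinv z zA) E yx.
  apply: contraNneq zy => E; by rewrite -(Hinv z zA) E.
have HB2 : forall z, z \in B -> phi (phi z) = z.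
  by move=> z; rewrite !inE => /and3P [_ _ zA]; apply: Hinv.
rewrite cardA /= negbK (IH B HB1 HB2); last by rewrite cardA ltnS in Hm; apply: ltnW.
suff -> : [set x in B | phi x == x] = [set x in A | phi x == x] by [].
apply/setP => z; rewrite !inE.
case: (eqVneq z y) => [->|zy] /=; first by rewrite yx eq_sym (negbTE nfx) andbF.
case: (eqVneq z x) => [->|zx] /=; first by rewrite (negbTE nfx) andbF.
by [].
Qed.
Lemma door_count (I L : finType) (g : I -> L) (S : {set L}) (a0 : L) :
  a0 \in S -> #|I| = #|S| -> (forall k, g k \in S) ->
  odd #|[set k | (S :\ a0) \subset g @: (~: [set k])]| = (S \subset g @: setT).
Proof.
move=> a0S cardI gS.
have imS : g @: setT \subset S by apply/subsetP => y /imsetP [x _ ->].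
case: (boolP (S \subset g @: setT)) => full.
  have imE : g @: setT = S by apply/eqP; rewrite eqEsubset imS full.
  have ginj : {in setT &, injective g}.
    by apply/imset_injP; rewrite imE cardsT cardI.
  have /imsetP [k0 _ gk0] : a0 \in g @: setT by rewrite imE.
  suff -> : [set k | (S :\ a0) \subset g @: (~: [set k])] = [set k0] by rewrite cards1.
  apply/setP => k; rewrite !inE.
  case: (eqVneq k k0) => [->|kk0].
    apply/subsetP => b; rewrite inE => /andP [ba0 bS].
    move: bS; rewrite -imE => /imsetP [x _ bx]; apply/imsetP; exists x => //.
    rewrite !inE; apply: contraNneq ba0 => xk0; by rewrite !inE bx xk0 -gk0.
  apply/negP => H; move/subsetP: H => H.
  have : g k \in S :\ a0.
    rewrite !inE gS andbT; apply: contra kk0 => /eqP gka.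
    by apply/eqP; apply: ginj; rewrite ?inE // gka.
  move/H => /imsetP [x]; rewrite !inE => xk gkx.
  by move: xk; rewrite (ginj _ _ _ _ gkx) ?inE ?eqxx.
case: (boolP ((S :\ a0) \subset g @: setT)) => sub; last first.
  suff -> : [set k | (S :\ a0) \subset g @: (~: [set k])] = set0 by rewrite cards0.
  apply/setP => k; rewrite !inE; apply: contraNF sub => H.
  apply: (subset_trans H); apply: imsetS; exact: subsetT.
have a0im : a0 \notin g @: setT.
  apply: contra full => a0im; apply/subsetP => b bS.
  case: (eqVneq b a0) => [->//|ba0]; apply: (subsetP sub); by rewrite !inE ba0.
have imE : g @: setT = S :\ a0.
  apply/eqP; rewrite eqEsubset sub andbT; apply/subsetP => y yim.
  rewrite !inE (subsetP imS _ yim) andbT; apply: contraNneq a0im => <-; done.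
have cardim : #|g @: setT| = #|I|.-1 by rewrite imE cardI (cardsD1 a0 S) a0S.
case: (boolP [exists k1, exists k2, (k1 != k2) && (g k1 == g k2)]); last first.
  move=> H; exfalso.
  have ginj : {in setT &, injective g}.
    move=> x y _ _ gxy; apply/eqP; apply: contraNT H => xy.
    by apply/existsP; exists x; apply/existsP; exists y; rewrite xy gxy eqxx.
  move/imset_injP: ginj; rewrite cardim cardsT.
  have : 0 < #|I| by rewrite cardI (cardsD1 a0 S) a0S.
  by case: #|I| => [//|p] _ /=; rewrite eqn_leq ltnn andbF.
case/existsP => k1 /existsP [k2 /andP [k12 /eqP g12]].
suff -> : [set k | (S :\ a0) \subset g @: (~: [set k])] = [set k1; k2].
  by rewrite cards2 k12.
apply/setP => k; rewrite !inE -imE.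
have Hk : forall k' k'', k' != k'' -> g k' = g k'' -> g @: setT \subset g @: (~: [set k']).
  move=> k' k'' kk gkk; apply/subsetP => y /imsetP [x _ ->].
  case: (eqVneq x k') => [->|xk]; apply/imsetP.
    by exists k''; rewrite // !inE eq_sym.
  by exists x; rewrite // !inE.
case: (eqVneq k k1) => [->|kk1] /=; first exact: Hk k12 g12.
case: (eqVneq k k2) => [->|kk2] /=.
  by apply: (Hk k2 k1); rewrite // eq_sym.
apply/negP => H.
have E : g @: setT \subset g @: ((~: [set k]) :\ k1).
  apply/subsetP => y /(subsetP H) /imsetP [x]; rewrite !inE => xk ->.
  case: (eqVneq x k1) => [->|xk1]; apply/imsetP.
    by exists k2; rewrite // !inE (eq_sym k2 k1) k12 (eq_sym k2 k) kk2.
  by exists x; rewrite // !inE xk1.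
have := subset_leq_card E.
rewrite cardim.
have := leq_imset_card g ((~: [set k]) :\ k1).
have c : #|[set~ k] :\ k1|.+1 = #|I|.-1.
  by have := cardsD1 k1 [set~ k]; rewrite !inE (eq_sym k1 k) kk1 cardsC1 add1n => <-.
rewrite -c => h1 h2.
by have := leq_trans h2 h1; rewrite ltnn.
Qed.

Ltac ifl := repeat (case: ifP => ?); lia.

Section Kuhn.
Variables (dd n : nat).
Local Notation d := dd.+1.
Variable lab : ('I_d -> nat) -> nat.
Definition kgrid (p : 'I_d -> nat) := forall i, p i <= n.+1.
Hypothesis Hle : forall p, kgrid p -> lab p <= d.
Hypothesis H0 : forall p (i : 'I_d), kgrid p -> p i = 0 -> i.+1 <= lab p.
Hypothesis HN : forall p (i : 'I_d), kgrid p -> p i = n.+1 -> lab p != i.+1.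

Definition Sx := ({ffun 'I_d -> 'I_n.+1} * {perm 'I_d})%type.
Definition vert (s : Sx) (k : nat) : 'I_d -> nat := fun i => s.1 i + (d - k <= s.2 i).

Definition inS (j : nat) (s : Sx) :=
  [forall i : 'I_d, (i < j) ==> ((s.1 i == 0 :> nat) && (s.2 i == i))].

Definition full (j : nat) (s : Sx) :=
  [forall a : 'I_d.+1, (j <= a) ==> [exists k : 'I_(d - j).+1, lab (vert s k) == a]].
Definition door (j : nat) (s : Sx) (k : 'I_(d - j).+1) :=
  [forall a : 'I_d.+1, (j < a) ==> [exists k' : 'I_(d - j).+1, (k' != k) && (lab (vert s k') == a)]].

Arguments door : clear implicits.

Definition rhof (j : nat) (x : 'I_d) : 'I_d :=
  if (j <= x) && (x < dd) then inord x.+1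
  else if (x == dd :> nat) && (j <= dd) then inord j else x.

Lemma rhofE j x : val (rhof j x) =
  if (j <= x) && (x < dd) then x.+1 else if (x == dd :> nat) && (j <= dd) then j else x.
Proof.
rewrite /rhof; case: ifP => h1 /=; first by rewrite inordK //; lia.
case: ifP => h2 //=; rewrite inordK //; lia.
Qed.

Lemma rhof_inj j : injective (rhof j).
Proof.
move=> x y /(congr1 val); rewrite !rhofE => h; apply/val_inj => /=.
have := ltn_ord x; have := ltn_ord y; move: h.
case: ifP => h1; case: ifP => h2; try case: ifP => h3; try case: ifP => h4; lia.
Qed.

Definition rho j : {perm 'I_d} := perm (@rhof_inj j).

Lemma rhoE j x : val (rho j x) =
  if (j <= x) && (x < dd) then x.+1 else if (x == dd :> nat) && (j <= dd) then j else x.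
Proof. by rewrite permE rhofE. Qed.

Definition up (v : {ffun 'I_d -> 'I_n.+1}) (a : 'I_d) : {ffun 'I_d -> 'I_n.+1} :=
  [ffun i => if i == a then inord (v i).+1 else v i].
Definition down (v : {ffun 'I_d -> 'I_n.+1}) (a : 'I_d) : {ffun 'I_d -> 'I_n.+1} :=
  [ffun i => if i == a then inord (v i).-1 else v i].

Definition phi (j : nat) (p : Sx * 'I_(d - j).+1) : Sx * 'I_(d - j).+1 :=
  let v := p.1.1 in let t := p.1.2 in let k := p.2 in
  if (0 < k) && (k < d - j) then ((v, (t * tperm (inord (d - k)) (inord (d - k.+1)))%g), k)
  else if k == 0 :> nat then
    let a := (t^-1)%g (inord dd) in
    if v a < n then ((up v a, (t * rho j)%g), ord_max) else p
  else
    let c := (t^-1)%g (inord j) in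
    if 0 < v c then ((down v c, (t * (rho j)^-1)%g), ord0) else p.
Arguments phi : clear implicits.


Lemma inSP j (s : Sx) : reflect (forall i : 'I_d, i < j -> (s.1 i = 0 :> nat) /\ s.2 i = i) (inS j s).
Proof.
apply: (iffP forallP) => H i.
  by move=> ij; have := H i; rewrite ij /= => /andP [/eqP -> /eqP ->].
by apply/implyP => ij; have [-> ->] := H i ij; rewrite !eqxx.
Qed.

Lemma vert_grid (s : Sx) k : kgrid (vert s k).
Proof. move=> i; rewrite /vert; have := ltn_ord (s.1 i); case: (d - k <= s.2 i) => /=; lia. Qed.

Lemma lab_range j (s : Sx) k : j <= d -> inS j s -> k <= d - j -> j <= lab (vert s k) <= d.
Proof.
move=> jd0.
move=> /inSP H kj; have -> : lab (vert s k) <= d by apply: Hle; apply: vert_grid.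
rewrite andbT.
case: j jd0 H kj => [//|j] jd0 H kj.
have jd : j < d by lia.
have [h1 h2] := H (Ordinal jd) (ltnSn j).
apply: (H0 (i:=Ordinal jd) (vert_grid s k)); rewrite /vert h1 h2 /=.
lia.
Qed.

Lemma door_countS j (s : Sx) : j <= d -> inS j s ->
  odd #|[set k | door j s k]| = full j s.
Proof.
move=> jd Hs.
pose g (k : 'I_(d - j).+1) : 'I_d.+1 := inord (lab (vert s k)).
pose S := [set (inord (j + k) : 'I_d.+1) | k : 'I_(d - j).+1].
have memS : forall a : 'I_d.+1, (a \in S) = (j <= a).
  move=> a; apply/imsetP/idP => [[k _ ->]|ja].
    rewrite inordK; have := ltn_ord k; lia.
  have ak : a - j < (d - j).+1 by have := ltn_ord a; lia.
  exists (Ordinal ak) => //; apply/val_inj; rewrite /= inordK; lia.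
have gval : forall k, val (g k) = lab (vert s k).
  move=> k; rewrite /g /= inordK //; have := lab_range (k:=k) jd Hs; have := ltn_ord k; lia.
have cardS : #|'I_(d - j).+1| = #|S|.
  rewrite card_imset // => x y /(congr1 val) /=; rewrite !inordK; try (have := ltn_ord x; have := ltn_ord y; lia).
  move=> h; apply/val_inj => /=; lia.
have a0S : (inord j : 'I_d.+1) \in S by rewrite memS inordK //; lia.
have gS : forall k, g k \in S.
  move=> k; rewrite memS gval; have := lab_range (k:=k) jd Hs; have := ltn_ord k; lia.
have -> : [set k | door j s k] = [set k | (S :\ inord j) \subset g @: ~: [set k]].
  apply/setP => k; rewrite !inE; apply/forallP/subsetP => [H a|H a].
    rewrite !inE memS => /andP [aj ja].
    have ja' : j < a by move: aj; rewrite -val_eqE /= inordK; lia.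
    have := H a; rewrite ja' /= => /existsP [k' /andP [kk /eqP lk]].
    apply/imsetP; exists k'; first by rewrite !inE.
    by apply/val_inj; rewrite gval.
  apply/implyP => ja.
  have : a \in S :\ inord j.
    by rewrite !inE memS -val_eqE /= inordK; lia.
  move/H => /imsetP [k']; rewrite !inE => kk ->.
  by apply/existsP; exists k'; rewrite kk gval eqxx.
rewrite (door_count a0S cardS gS).
apply/subsetP/forallP => [H a|H a].
  apply/implyP => ja; rewrite -memS in ja.
  have /imsetP [k _ ->] := H a ja.
  by apply/existsP; exists k; rewrite gval.
rewrite memS => ja; have := H a; rewrite ja /= => /existsP [k /eqP lk].
apply/imsetP; exists k; rewrite ?inE //.
by apply/val_inj; rewrite gval.
Qed.


Lemma rho_lt j (i : 'I_d) : i < j -> rho j i = i.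
Proof. move=> ij; apply/val_inj; rewrite rhoE /=; ifl. Qed.

Lemma rhoV_lt j (i : 'I_d) : i < j -> ((rho j)^-1)%g i = i.
Proof. by move=> ij; rewrite -{1}(rho_lt ij) permK. Qed.

Lemma rho_dd j : j <= dd -> rho j (inord dd) = inord j.
Proof. move=> jd; apply/val_inj; rewrite rhoE /= !inordK //; ifl. Qed.

Lemma rhoV_j j : j <= dd -> ((rho j)^-1)%g (inord j) = inord dd.
Proof. by move=> jd; rewrite -(rho_dd jd) permK. Qed.

Lemma doorP j s k : reflect (forall a, j < a <= d -> exists k', [/\ k' <= d - j, k' != val k & lab (vert s k') = a])
  (door j s k).
Proof.
apply: (iffP forallP) => H.
  move=> a /andP [ja ad]; have := H (inord a); rewrite inordK // ja /= => /existsP [k' /andP [kk /eqP lk]].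
  exists (val k'); split; [exact: ltn_ord k' | exact: kk | exact: lk].
move=> a; apply/implyP => ja; have jad : j < a <= d by rewrite ja -ltnS ltn_ord.
have [k' [k'd kk lk]] := H a jad.
by apply/existsP; exists (Ordinal (k'd : k' < (d - j).+1)); rewrite lk eqxx andbT -val_eqE.
Qed.

Lemma fullP j s : reflect (forall a, j <= a <= d -> exists2 k, k <= d - j & lab (vert s k) = a)
  (full j s).
Proof.
apply: (iffP forallP) => H.
  move=> a /andP [ja ad]; have := H (inord a); rewrite inordK // ja /= => /existsP [k' /eqP lk].
  exists (val k'); first exact: ltn_ord k'.
  by rewrite lk.
move=> a; apply/implyP => ja; have jad : j <= a <= d by rewrite ja -ltnS ltn_ord.
have [k' k'd lk] := H a jad.
by apply/existsP; exists (Ordinal (k'd : k' < (d - j).+1)); rewrite lk eqxx.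
Qed.


Definition tp (k : nat) : {perm 'I_d} := tperm (inord (d - k)) (inord (d - k.+1)).

Lemma vert_swap (v : {ffun 'I_d -> 'I_n.+1}) (t : {perm 'I_d}) (k k' : nat) :
  0 < k -> k < d -> k' != k -> vert (v, (t * tp k)%g) k' = vert (v, t) k'.
Proof.
move=> k0 kd kk; apply: functional_extensionality => i; rewrite /vert /= permM /tp.
have hx : val (inord (d - k) : 'I_d) = d - k by rewrite /= inordK //; lia.
have hy : val (inord (d - k.+1) : 'I_d) = d - k.+1 by rewrite /= inordK //; lia.
case: tpermP => [E|E|E1 E2] //.
  by rewrite E hx hy; lia.
by rewrite E hx hy; lia.
Qed.

Lemma vert_up j (v : {ffun 'I_d -> 'I_n.+1}) (t : {perm 'I_d}) k' : j <= dd ->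
  v ((t^-1)%g (inord dd)) < n -> k' < d - j ->
  vert (up v ((t^-1)%g (inord dd)), (t * rho j)%g) k' = vert (v, t) k'.+1.
Proof.
move=> jd va kj; apply: functional_extensionality => i; rewrite /vert /= ffunE permM.
case: (eqVneq i ((t^-1)%g (inord dd))) => [E|ia].
  rewrite E permKV rho_dd // !inordK //; lia.
have tid : val (t i) != dd.
  apply: contra ia => /eqP E; apply/eqP.
  have E' : t i = inord dd by apply/val_inj; rewrite /= inordK.
  by rewrite -E' permK.
rewrite rhoE; have := ltn_ord (t i); move: tid; rewrite /=; ifl.
Qed.

Lemma phi_mid j v t (k : 'I_(d - j).+1) : 0 < k < d - j ->
  phi j ((v, t), k) = ((v, (t * tp k)%g), k).
Proof. by move=> kk; rewrite /phi /= kk. Qed.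

Lemma phi_0 j v t (k : 'I_(d - j).+1) : val k = 0 ->
  phi j ((v, t), k) = let a := (t^-1)%g (inord dd) in
    if v a < n then ((up v a, (t * rho j)%g), ord_max) else ((v, t), k).
Proof. by move=> k0; rewrite /phi /= k0. Qed.

Lemma phi_m j v t (k : 'I_(d - j).+1) : val k = d - j -> 0 < d - j ->
  phi j ((v, t), k) = let c := (t^-1)%g (inord j) in
    if 0 < v c then ((down v c, (t * (rho j)^-1)%g), ord0) else ((v, t), k).
Proof. move=> km m0; rewrite /phi /= km ltnn andbF; case: eqP => //; lia. Qed.

Lemma up_down (v : {ffun 'I_d -> 'I_n.+1}) a : 0 < v a -> up (down v a) a = v.
Proof.
move=> va; apply/ffunP => i; rewrite !ffunE; case: eqVneq => [->|//].
apply/val_inj; rewrite /= !inordK; have := ltn_ord (v a); lia.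
Qed.

Lemma down_up (v : {ffun 'I_d -> 'I_n.+1}) a : v a < n -> down (up v a) a = v.
Proof.
move=> va; apply/ffunP => i; rewrite !ffunE; case: eqVneq => [->|//].
apply/val_inj; rewrite /= !inordK; have := ltn_ord (v a); lia.
Qed.

Lemma phi_invol j p : j <= dd -> phi j (phi j p) = p.
Proof.
case: p => [[v t] k] jd.
case: (boolP (0 < k < d - j)) => kk.
  by rewrite !phi_mid // -mulgA tperm2 mulg1.
case: (eqVneq (val k) 0) => k0.
  rewrite phi_0 //=; case: ifP => va; last by rewrite phi_0 //= va.
  rewrite phi_m /=; [|by []|lia].
  rewrite invMg permM rhoV_j // ffunE eqxx inordK; last by rewrite ltnS va.
  rewrite ltn0Sn down_up // mulgK; congr (_, _); apply/val_inj; by rewrite /= k0.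
have km : (k : nat) = d - j by have := ltn_ord k; move: kk k0; rewrite /=; lia.
rewrite phi_m //=; last by lia.
case: ifP => vc; last by rewrite phi_m //= ?vc //; lia.
rewrite phi_0 //= invMg invgK permM rho_dd // ffunE eqxx inordK; last first.
  by apply: leq_ltn_trans (leq_pred _) (ltn_ord _).
have -> : (v ((t^-1)%g (inord j))).-1 < n by rewrite -ltnS prednK // ltn_ord.
rewrite up_down // mulgKV; congr (_, _); apply/val_inj; by rewrite /= km.
Qed.


Lemma inS_a j (v : {ffun 'I_d -> 'I_n.+1}) (t : {perm 'I_d}) : j <= dd -> inS j (v, t) -> j <= (t^-1)%g (inord dd).
Proof.
move=> jd /inSP Hs; case: (ltnP ((t^-1)%g (inord dd)) j) => // aj.
have [_ ta] := Hs _ aj; move: ta; rewrite /= permKV => /(congr1 val) /=; rewrite inordK //; lia.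
Qed.

Lemma inS_c j (v : {ffun 'I_d -> 'I_n.+1}) (t : {perm 'I_d}) : j <= dd -> inS j (v, t) -> j <= (t^-1)%g (inord j).
Proof.
move=> jd /inSP Hs; case: (ltnP ((t^-1)%g (inord j)) j) => // aj.
have [_ ta] := Hs _ aj; move: ta; rewrite /= permKV => /(congr1 val) /=; rewrite inordK //; lia.
Qed.

Lemma inS_weak j s : inS j.+1 s -> inS j s.
Proof. by move=> /inSP H; apply/inSP => i ij; apply: H; apply: ltnW. Qed.

Lemma phi_inS j p : j <= dd -> inS j p.1 -> inS j (phi j p).1.
Proof.
case: p => [[v t] k] jd Hs /=.
case: (boolP (0 < k < d - j)) => kk.
  rewrite phi_mid //=; apply/inSP => i ij /=; move/inSP: Hs => Hs.
  have [h1 h2] := Hs i ij; split => //.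
  rewrite permM h2 /tp tpermD // -val_eqE /= inordK; lia.
case: (eqVneq (val k) 0) => k0.
  rewrite phi_0 //=; case: ifP => va //; apply/inSP => i ij /=.
  have ja := inS_a jd Hs; move/inSP: Hs => Hs; have [h1 h2] := Hs i ij.
  have ia : (i == (t^-1)%g (inord dd)) = false by apply/negbTE; rewrite -val_eqE /=; lia.
  by rewrite ffunE ia permM h2 rho_lt.
have km : (k : nat) = d - j by have := ltn_ord k; move: kk k0; rewrite /=; lia.
rewrite phi_m //=; last by lia.
case: ifP => vc //; apply/inSP => i ij /=.
have ja := inS_c jd Hs; move/inSP: Hs => Hs; have [h1 h2] := Hs i ij.
have ia : (i == (t^-1)%g (inord j)) = false by apply/negbTE; rewrite -val_eqE /=; lia.
by rewrite ffunE ia permM h2 rhoV_lt.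
Qed.

Lemma door_swap j (v : {ffun 'I_d -> 'I_n.+1}) (t : {perm 'I_d}) (k : 'I_(d - j).+1) : j <= dd -> 0 < k < d - j ->
  door j (v, (t * tp k)%g) k = door j (v, t) k.
Proof.
move=> jd /andP [k0 km].
apply/doorP/doorP => H a ha; have [k' [k'd kk lk]] := H a ha; exists k'; split => //.
  rewrite -lk vert_swap //; lia.
rewrite -lk vert_swap //; lia.
Qed.

Lemma door_up j (v : {ffun 'I_d -> 'I_n.+1}) (t : {perm 'I_d}) (k : 'I_(d - j).+1) : j <= dd -> val k = 0 ->
  v ((t^-1)%g (inord dd)) < n ->
  door j (up v ((t^-1)%g (inord dd)), (t * rho j)%g) ord_max = door j (v, t) k.
Proof.
move=> jd k0 va; apply/doorP/doorP => H a ha; have [k' [k'd kk lk]] := H a ha.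
  exists k'.+1; split; [|by rewrite k0|].
    by move: kk; rewrite /=; lia.
  rewrite -(vert_up (j:=j)) //; move: kk k'd; rewrite /=; lia.
exists k'.-1; split; [lia| |].
  by move: kk; rewrite /= k0; lia.
rewrite (vert_up (j:=j)) //; last by move: kk; rewrite /= k0; lia.
by rewrite prednK // lt0n -k0.
Qed.


Lemma phi_door j p : j <= dd -> inS j p.1 -> door j p.1 p.2 -> door j (phi j p).1 (phi j p).2.
Proof.
case: p => [[v t] k] jd Hs /= Hd.
case: (boolP (0 < k < d - j)) => kk; first by rewrite phi_mid //= door_swap.
case: (eqVneq (val k) 0) => k0.
  rewrite phi_0 //=; case: ifP => va //=; by rewrite (door_up (k:=k)).
have km : (k : nat) = d - j by have := ltn_ord k; move: kk k0; rewrite /=; lia.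
rewrite phi_m //=; last by lia.
case: ifP => vc //=.
have ec : ((t * (rho j)^-1)^-1)%g (inord dd) = (t^-1)%g (inord j).
  by rewrite invMg invgK permM rho_dd.
have wc : (down v ((t^-1)%g (inord j))) ((t * (rho j)^-1)^-1 %g (inord dd)) < n.
  rewrite ec ffunE eqxx inordK; first by rewrite -ltnS prednK // ltn_ord.
  by apply: leq_ltn_trans (leq_pred _) (ltn_ord _).
have k0' : val (ord0 : 'I_(d - j).+1) = 0 by [].
rewrite -(door_up jd k0' wc) ec up_down // mulgKV.
by have -> : (ord_max : 'I_(d - j).+1) = k by apply/val_inj; rewrite /= km.
Qed.

Lemma door_full j s : j <= dd -> door j s ord_max = full j.+1 s.
Proof.
move=> jd; apply/doorP/fullP => H a ha.
  have ha' : j < a <= d by lia.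
  have [k' [k'd kk lk]] := H a ha'; exists k' => //; move: kk k'd; rewrite /=; lia.
have ha' : j.+1 <= a <= d by lia.
have [k' k'd lk] := H a ha'; exists k'; split => //; rewrite /=; lia.
Qed.

Lemma fixed_char j p : j <= dd -> inS j p.1 -> door j p.1 p.2 ->
  (phi j p == p) = (p.2 == ord_max) && inS j.+1 p.1.
Proof.
case: p => [[v t] k] jd Hs /= Hd.
case: (boolP (0 < k < d - j)) => kk.
  rewrite phi_mid //.
  have -> : (k == ord_max) = false by rewrite -val_eqE /=; lia.
  apply/negbTE/eqP => -[E].
  have E' : tp k = 1%g by apply: (@mulgI _ t); rewrite mulg1.
  have := congr1 (fun s : {perm 'I_d} => val (s (inord (d - k)))) E'.
  rewrite /tp tpermL perm1 /= !inordK; lia.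
case: (eqVneq (val k) 0) => k0.
  have -> : (k == ord_max) = false by rewrite -val_eqE /= k0; lia.
  rewrite phi_0 //=; case: ifP => va.
    apply/negbTE; rewrite xpair_eqE -val_eqE /= k0 (_ : (d - j == 0) = false) ?andbF //; lia.
  exfalso.
  have ja := inS_a jd Hs.
  set a := (t^-1)%g (inord dd) in va ja.
  have vaN : (v a : nat) = n by have := ltn_ord (v a); move: va; lia.
  have ha : j < a.+1 <= d by have := ltn_ord a; lia.
  have [k' [k'd kk' lk]] := (elimT (doorP _ _) Hd) a.+1 ha.
  have : vert (v, t) k' a = n.+1.
    rewrite /vert /= vaN /a permKV inordK //; move: kk'; rewrite k0; lia.
  move/(HN (vert_grid _ _)); by rewrite lk eqxx.
have km : (k : nat) = d - j by have := ltn_ord k; move: kk k0; rewrite /=; lia.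
have -> : (k == ord_max) by rewrite -val_eqE /= km.
rewrite phi_m //=; last by lia.
have jc := inS_c jd Hs.
case: ifP => vc.
  rewrite xpair_eqE -val_eqE /= (eq_sym 0) (negbTE k0) andbF; apply/esym/negbTE.
  have jj : (inord j : 'I_d) < j.+1 by rewrite inordK //; lia.
  apply: contraL vc => /inSP H; have [h1 h2] := H (inord j) jj.
  by rewrite -{1}h2 permK h1.
rewrite eqxx; apply/esym.
set c := (t^-1)%g (inord j) in vc jc.
have cj : (c : nat) = j.
  apply/eqP; rewrite eqn_leq jc andbT; apply/negP => cj.
  have ha : j < j.+1 <= d by lia.
  have [k' [k'd kk' lk]] := (elimT (doorP _ _) Hd) j.+1 ha.
  have : vert (v, t) k' c = 0.
    rewrite /vert /= /c permKV inordK; last by lia.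
    move: vc kk' k'd => /= vc kk' k'd; rewrite km in kk'; rewrite -/c; lia.
  move=> E; have := H0 (vert_grid _ _) E; rewrite lk; lia.
move/inSP: Hs => Hs; apply/inSP => i ij.
case: (ltnP i j) => ij'; first exact: Hs.
have ic : i = c by apply/val_inj; rewrite /= cj; lia.
rewrite ic; split; first by move: vc; case: (v c) => [[|x] ?].
apply/val_inj => /=; rewrite cj /c permKV inordK //; lia.
Qed.


Definition DP j := [set p : Sx * 'I_(d - j).+1 | inS j p.1 && door j p.1 p.2].
Definition Fj j := [set s : Sx | inS j s && full j s].

Lemma step j : j <= dd -> odd #|Fj j| = odd #|Fj j.+1|.
Proof.
move=> jd.
have e1 : odd #|Fj j| = odd (\sum_(s | inS j s) #|[set k | door j s k]|).
  have -> : #|Fj j| = \sum_(s | inS j s) (full j s : nat).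
    rewrite -sum1_card big_mkcond /= [RHS]big_mkcond /=; apply: eq_bigr => s _.
    by rewrite inE; case: (inS j s); case: (full j s).
  apply: (big_ind2 (fun x y => odd x = odd y)) => //.
    by move=> x1 y1 x2 y2 h1 h2; rewrite !oddD h1 h2.
  by move=> s Hs; rewrite door_countS //; [case: (full j s) | apply: ltnW].
have e2 : \sum_(s | inS j s) #|[set k | door j s k]| = #|DP j|.
  transitivity (\sum_(s : Sx) \sum_(k : 'I_(d - j).+1) ((inS j s && door j s k) : nat)).
    rewrite big_mkcond /=; apply: eq_bigr => s _; case: (inS j s) => /=; last by rewrite big1.
    rewrite -sum1_card big_mkcond /=; apply: eq_bigr => k _; rewrite inE; by case: door.
  rewrite pair_big /= -sum1_card [RHS]big_mkcond /=; apply: eq_bigr => p _; rewrite inE.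
  by case: (inS j p.1 && door j p.1 p.2).
have e3 : odd #|DP j| = odd #|[set p in DP j | phi j p == p]|.
  apply: involution_parity.
    move=> p; rewrite !inE => /andP [h1 h2]; by rewrite phi_inS // phi_door.
  by move=> p _; apply: phi_invol.
have e4 : [set p in DP j | phi j p == p] = [set (s, ord_max) | s in Fj j.+1].
  apply/setP => p; rewrite !inE; apply/idP/imsetP.
    case/andP => /andP [h1 h2] h3.
    have := fixed_char jd h1 h2; rewrite h3 => /esym/andP [/eqP e h4].
    exists p.1; first by rewrite /Fj inE h4 -door_full // -e.
    by rewrite -e; exact: surjective_pairing.
  case=> s; rewrite /Fj inE => /andP [h1 h2] ->.
  have h3 : door j s ord_max by rewrite door_full.
  have h1' := inS_weak h1.
  have := fixed_char (p := (s, ord_max)) jd h1' h3; rewrite eqxx h1 => ->.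
  by apply/andP; split => //; apply/andP; split.
rewrite e1 e2 e3 e4 card_imset; first by [].
by move=> x y [].
Qed.

Lemma base : odd #|Fj d|.
Proof.
pose s0 : Sx := ([ffun => ord0], 1%g).
suff -> : Fj d = [set s0] by rewrite cards1.
apply/setP => s; rewrite !inE; apply/idP/eqP.
  case: s => v t /andP [/inSP H _]; congr (_, _).
    by apply/ffunP => i; rewrite ffunE; apply/val_inj; have [h1 _] := H i (ltn_ord i).
  by apply/permP => i; rewrite perm1; have [_ h2] := H i (ltn_ord i).
move=> ->; apply/andP; split.
  by apply/inSP => i _; rewrite /= ffunE perm1.
apply/fullP => a ha; exists 0 => //.
have -> : vert s0 0 = fun _ => 0.
  apply: functional_extensionality => i; rewrite /vert /= ffunE perm1 subn0.
  rewrite (_ : nat_of_ord (ord0 : 'I_n.+1) = 0) //; have := ltn_ord i; lia.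
have hle : lab (fun _ => 0) <= d by apply: Hle.
have h1 := H0 (i := ord_max) (p := fun _ => 0) (fun _ => leq0n _) erefl.
rewrite (_ : nat_of_ord (ord_max : 'I_d) = dd) // in h1; lia.
Qed.

Lemma odd_all t : t <= d -> odd #|Fj (d - t)|.
Proof.
elim: t => [|t IH] td; first by rewrite subn0 base.
have jd : d - t.+1 <= dd by lia.
have := step jd; rewrite (_ : (d - t.+1).+1 = d - t); last by lia.
by move=> ->; apply: IH; lia.
Qed.

Lemma kuhn_lemma : exists w : 'I_d.+1 -> ('I_d -> nat),
  [/\ forall a, kgrid (w a), forall a b i, w a i <= (w b i).+1 & forall a, lab (w a) = a].
Proof.
have := odd_all (leqnn d); rewrite subnn.
case: (set_0Vmem (Fj 0)) => [->|[s]]; first by rewrite cards0.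
rewrite inE => /andP [_ /fullP Hf] _.
have Hk : forall a : 'I_d.+1, exists2 k, k <= d & lab (vert s k) = a.
  move=> a; have [k kd lk] := Hf a (ltn_ord a); by exists k; first by rewrite subn0 in kd.
pose kk (a : 'I_d.+1) : nat := odflt ord0 [pick k : 'I_d.+1 | lab (vert s k) == a].
exists (fun a => vert s (kk a)); split.
- move=> a; exact: vert_grid.
- move=> a b i; rewrite /vert; case: (d - kk a <= s.2 i); case: (d - kk b <= s.2 i) => /=; lia.
- move=> a; rewrite /kk; case: pickP => [k /eqP //|H].
  have [k kd lk] := Hk a.
  by have := H (Ordinal (kd : k < d.+1)); rewrite /= lk eqxx.
Qed.

End Kuhn.
End KuhnDev.

From mathcomp Require Import all_classical all_reals.
From mathcomp Require Import ereal.
From mathcomp Require Import lra.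
Import Order.TTheory GRing.Theory Num.Theory.
Local Open Scope classical_set_scope.
Local Open Scope ring_scope.

Lemma bigmax_ge_seq (R : realType) (I : eqType) (s : seq I) (F : I -> R) x :
  x \in s -> F x <= \big[Num.max/0]_(j <- s) F j.
Proof.
elim: s => // y s IH; rewrite inE big_cons le_max => /orP [/eqP ->|/IH ->].
  by rewrite lexx.
by rewrite orbT.
Qed.

Lemma bigmax_ge (R : realType) (m : nat) (F : 'I_m -> R) (i : 'I_m) :
  F i <= \big[Num.max/0]_(j < m) F j.
Proof. exact: bigmax_ge_seq (mem_index_enum i). Qed.

Lemma bigmax_le (R : realType) (m : nat) (F : 'I_m -> R) (c : R) :
  0 <= c -> (forall i, F i <= c) -> \big[Num.max/0]_(j < m) F j <= c.
Proof.
move=> c0 H; elim/big_ind: _ => // x y hx hy; by rewrite ge_max hx hy.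
Qed.

Theorem mainTheorem14 (R : realType) (d : nat) (P : set (set ('I_d -> R))) :
  is_partition P -> adjacent_or_far P ->
  (exists2 D : R, 0 < D & forall X, P X -> (diam X < D%:E)%E) ->
  has_clique P d.+1.
Proof.
move=> [Pne [Pdisj Pcov]] [eps eps0 Hfar] [D D0 Hdiam].
have same : forall X Y x, P X -> P Y -> X x -> Y x -> X = Y.
  move=> X Y x PX PY Xx Yx; case: (pselect (X = Y)) => // XY.
  have := Pdisj X Y PX PY XY => E.
  have : (X `&` Y) x by split.
  by rewrite E.
have dmax_lt : forall X x y, P X -> X x -> X y -> dmax x y < D.
  move=> X x y PX Xx Xy.
  have h1 : ((dmax x y)%:E <= diam X)%E by apply: ereal_sup_ubound; exists (x, y).
  by have := le_lt_trans h1 (Hdiam X PX); rewrite lte_fin.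
case: d P Pne Pdisj Pcov Hfar Hdiam same dmax_lt => [|dd] P Pne Pdisj Pcov Hfar Hdiam same dmax_lt.
  have [X PX _] := Pcov (fun _ => 0).
  exists (fun _ => X); split; first by move=> a b _; rewrite (ord1 a) (ord1 b).
  split => // i j; by rewrite (ord1 i) (ord1 j) eqxx.
pose h := eps / 2.
have h0 : 0 < h by rewrite /h divr_gt0.
have heps : h < eps by rewrite /h; lra.
pose n := Num.Def.trunc (D / h).
have Dn : D < h * n.+1%:R.
  by have := truncnS_gt (D / h); rewrite ltr_pdivrMr // mulrC.
pose g (p : 'I_dd.+1 -> nat) : 'I_dd.+1 -> R := fun i => h * (p i)%:R.
pose meets p (i : 'I_dd.+1) := exists2 q, KuhnDev.kgrid n q &
  (q i = 0%N /\ exists2 X, P X & (X (g p) /\ X (g q))).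
pose lab p := \max_(i < dd.+1 | `[< meets p i >]) i.+1.
have dist_big : forall p q i, p i = 0%N -> q i = n.+1 -> D < dmax (g p) (g q).
  move=> p q i hp hq; apply: lt_le_trans Dn _.
  apply: le_trans (bigmax_ge (fun i => `|g p i - g q i|) i).
  rewrite /g hp hq mulr0 sub0r normrN ger0_norm //.
  by apply: mulr_ge0; [exact: ltW|exact: ler0n].
have lab_eq : forall X p p', P X -> X (g p) -> X (g p') -> lab p = lab p'.
  move=> X p p' PX Xp Xp'; apply: eq_bigl => i.
  apply/asboolP/asboolP => -[q gq [qi [Y PY [Yp Yq]]]]; exists q => //; split => //; exists Y => //; split => //.
    by rewrite -(same X Y (g p) PX PY Xp Yp).
  by rewrite -(same X Y (g p') PX PY Xp' Yp).
have Hle : forall p, KuhnDev.kgrid n p -> (lab p <= dd.+1)%N.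
  by move=> p _; apply/bigmax_leqP => i _; exact: ltn_ord i.
have H0 : forall p (i : 'I_dd.+1), KuhnDev.kgrid n p -> p i = 0%N -> (i < lab p)%N.
  move=> p i gp pi0; apply: (@leq_bigmax_cond _ _ (fun i : 'I_dd.+1 => i.+1) i).
  apply/asboolP; exists p => //; split => //.
  by have [X PX Xp] := Pcov (g p); exists X.
have HN : forall p (i : 'I_dd.+1), KuhnDev.kgrid n p -> p i = n.+1 -> lab p != i.+1.
  move=> p i gp pin; apply/eqP => E.
  have : (lab p = 0%N) \/ exists2 j, `[< meets p j >] & j.+1 = lab p.
    rewrite /lab; apply: (big_ind (fun v => v = 0%N \/ exists2 j, `[< meets p j >] & j.+1 = v)).
    - by left.
    - move=> x y [->|[j mj <-]] [->|[j' mj' <-]]; rewrite ?max0n ?maxn0; try by left.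
      + by right; exists j'.
      + by right; exists j.
      + by right; rewrite /maxn; case: ifP => _; [exists j'|exists j].
    - by move=> j mj; right; exists j.
  rewrite E => -[//|[j /asboolP mj /eqP]]; rewrite eqSS => /eqP ji.
  have {}ji : j = i by apply/val_inj.
  rewrite ji in mj; case: mj => q gq [qi [X PX [Xp Xq]]].
  have := dmax_lt X (g q) (g p) PX Xq Xp.
  by have := dist_big q p i qi pin; move=> /lt_trans H /H; rewrite ltxx.
have [w [wg wadj wlab]] := KuhnDev.kuhn_lemma Hle H0 HN.
pose C a := s2val (cid2 (Pcov (g (w a)))).
have PC : forall a, P (C a) by move=> a; exact: (s2valP (cid2 (Pcov (g (w a))))).
have CC : forall a, C a (g (w a)) by move=> a; exact: (s2valP' (cid2 (Pcov (g (w a))))).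
exists C; split; [|split] => //.
  move=> a b E; apply/val_inj; rewrite /= -(wlab a) -(wlab b).
  by apply: (lab_eq (C a)) => //; rewrite E.
move=> a b _; have [//|far] := Hfar (C a) (C b) (PC a) (PC b).
exfalso; have := far _ _ (CC a) (CC b).
have : dmax (g (w a)) (g (w b)) <= h.
  apply: bigmax_le; first exact: ltW.
  move=> i; rewrite /g -mulrBr normrM (ger0_norm (ltW h0)).
  rewrite -[X in _ <= X]mulr1 ler_wpM2l ?(ltW h0) // ler_distl.
  have h1 : ((w a i)%:R <= (w b i)%:R + 1 :> R) by rewrite natr1 ler_nat wadj.
  have h2 : ((w b i)%:R <= (w a i)%:R + 1 :> R) by rewrite natr1 ler_nat wadj.
  apply/andP; split; lra.
move=> H1 H2; have := lt_le_trans H2 H1; lra.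
Qed.
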